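(* Let $(X,\mathcal{A},\mu)$ be a probability space and let $\{E_i\}_{i\in\mathbb{N}}$ be a sequence of sets in $\mathcal{A}$. Suppose there exists $0<c_0<1$ such that the following holds: for every $\delta>0$ and every pair of integers $q_1<q_2$ there exist an infinite set $\mathcal{I}\subset\mathbb{N}$ and $i_0=i_0(q_1,q_2,\delta)$ such that $\inf\{\mu(E_i):i\in\mathcal{I}\}>c_0$ and $$\mu(A\cap E_i)\le(1+\delta)\mu(A)\mu(E_i)\quad\text{for all }i\in\mathcal{I}\text{ with }i\ge i_0,\qquad\text{where }A=\bigcup_{j=q_1}^{q_2}E_j.$$ Then $\mu(E_\infty)=1$. In particular, $\mu(E_\infty)=1$ whenever $\limsup_{i\to\infty}\mu(E_i)>0$ and condition (M1) holds.
   Context: $E_\infty:=\limsup_{i\to\infty}E_i=\bigcap_{t=1}^\infty\bigcup_{i=t}^\infty E_i$. Condition (M1): for every $\delta>0$ and all natural numbers $q_1<q_2$ there exists $i_0=i_0(q_1,q_2,\delta)$ such that for all $i\ge i_0$, $\mu(A\cap E_i)\le(1+\delta)\mu(A)\mu(E_i)$ where $A=\bigcup_{j=q_1}^{q_2}E_j$. *)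

(* Defs.v *)
From HB Require Import structures.
From mathcomp Require Import all_boot all_order all_algebra.
From mathcomp Require Import all_classical all_reals all_analysis.
Set Implicit Arguments. Unset Strict Implicit. Unset Printing Implicit Defensive.
Import Order.TTheory GRing.Theory Num.Theory.

Definition union_range T (E : (set T)^nat) (q1 q2 : nat) : set T :=
  \big[setU/set0]_(q1 <= j < q2.+1) E j.

(* Main.v *)
Require Import Defs.
From HB Require Import structures.
From mathcomp Require Import all_boot all_order all_algebra.
From mathcomp Require Import all_classical all_reals all_analysis.
From mathcomp Require Import ring lra.
Import Order.TTheory GRing.Theory Num.Theory.
Local Open Scope classical_set_scope.
Local Open Scope ring_scope.

Lemma mem_bigU T (E : (set T)^nat) q1 n x :
  (\big[setU/set0]_(q1 <= j < n) E j) x <-> exists j, (q1 <= j < n)%N /\ E j x.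
Proof.
elim: n => [|n IH].
  rewrite big_geq //; split => // -[j []]; by rewrite ltn0 andbF.
case: (leqP q1 n) => hq.
  rewrite big_nat_recr //=; split.
    case=> [/IH [j [/andP[h1 h2] hj]]|hx].
      by exists j; rewrite h1 ltnS ltnW.
    by exists n; rewrite hq ltnS leqnn.
  move=> [j [/andP[h1 h2] hj]]; rewrite ltnS leq_eqVlt in h2.
  case/orP: h2 => [/eqP <-|h2]; [by right|left; apply/IH; exists j; rewrite h1 h2 //].
rewrite big_geq //; split => // -[j [/andP[h1 h2] _]].
by have := leq_trans h1 h2; rewrite leqNgt hq.
Qed.

Lemma mem_ur T (E : (set T)^nat) q1 q2 x :
  union_range E q1 q2 x <-> exists j, (q1 <= j <= q2)%N /\ E j x.
Proof. by rewrite /union_range mem_bigU. Qed.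

Lemma ur_meas d (T : measurableType d) (E : (set T)^nat) q1 q2 :
  (forall i, measurable (E i)) -> measurable (union_range E q1 q2).
Proof. by move=> mE; apply: bigsetU_measurable. Qed.

Lemma inf_ge (I : set nat) N : infinite_set I -> exists i, I i /\ (N <= i)%N.
Proof.
move=> hI; apply: contrapT => hn; apply: hI.
apply: (@sub_finite_set _ _ `I_N); last exact: finite_II.
move=> i Ii /=; rewrite ltnNge; apply/negP => hi; apply: hn; by exists i.
Qed.
Section S.
Context d (T : measurableType d) (R : realType) (P : probability T R).

Lemma PE {X} : measurable X -> P X = (fine (P X))%:E.
Proof. by move=> mX; rewrite fineK // fin_num_measure. Qed.

Lemma pr_ge0 X : 0 <= fine (P X).
Proof. by apply: fine_ge0; apply: measure_ge0. Qed.

Lemma pr_le1 {X} : measurable X -> fine (P X) <= 1.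
Proof. by move=> mX; rewrite -lee_fin -PE // probability_le1. Qed.

Lemma pr_le {X Y} : measurable X -> measurable Y -> X `<=` Y -> fine (P X) <= fine (P Y).
Proof. by move=> mX mY XY; rewrite -lee_fin -!PE // le_measure // inE. Qed.

Lemma conv (x y z w : \bar R) : x \is a fin_num -> y \is a fin_num ->
  z \is a fin_num -> w \is a fin_num ->
  (x + y - z <= w)%E -> fine x + fine y - fine z <= fine w.
Proof.
by move: x y z w => [x| |] // [y| |] // [z| |] // [w| |] // _ _ _ _ /=; rewrite -EFinD -EFinB lee_fin.
Qed.

Variable E : (set T)^nat.
Hypothesis mE : forall i, measurable (E i).

Lemma iter (c0 delta : R) t : 0 < c0 < 1 -> 0 < delta ->
  (forall q1 q2, (q1 < q2)%N -> forall N, exists i, (N <= i)%N /\ (c0%:E < P (E i))%E /\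
     (P (union_range E q1 q2 `&` E i) <=
              (1 + delta)%:E * P (union_range E q1 q2) * P (E i))%E) ->
  forall n, exists q2, (t < q2)%N /\
    1 - (1 + delta) * fine (P (union_range E t q2)) <= (1 - c0) ^+ n.
Proof.
move=> /andP[c0p c01] dp H; elim=> [|n [q2 [tq2 IH]]].
  exists t.+1; split => //; rewrite expr0.
  have := pr_ge0 (union_range E t t.+1); nra.
have [i [q2i [c0i hi]]] := H t q2 tq2 q2.+1.
have mA := @ur_meas _ _ E t q2 mE.
have mB := @ur_meas _ _ E t i mE.
exists i; split; first exact: (ltn_trans tq2).
set a := fine (P (union_range E t q2)) in IH *.
set b := fine (P (union_range E t i)).
set p := fine (P (E i)).
set r := fine (P (union_range E t q2 `&` E i)).
have mU : measurable (union_range E t q2 `|` E i) by exact: measurableU.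
have mI : measurable (union_range E t q2 `&` E i) by exact: measurableI.
have sub1 : union_range E t q2 `<=` union_range E t i.
  move=> x /mem_ur [j [/andP[h1 h2] hj]]; apply/mem_ur; exists j.
  by rewrite h1 (leq_trans h2) // ltnW.
have sub2 : union_range E t q2 `|` E i `<=` union_range E t i.
  move=> x [/sub1 //|hx]; apply/mem_ur; exists i.
  by rewrite leqnn andbT ltnW // (ltn_trans tq2).
have ab : a <= b by apply: pr_le.
have hU : a + p - r <= b.
  have hU' : (P (union_range E t q2 `|` E i) <= P (union_range E t i))%E.
    by rewrite le_measure // inE.
  rewrite (measureUfinl (mu:=P) mA (mE i)) in hU'; last exact: (le_lt_trans (probability_le1 P mA) (ltry 1)).
  apply: conv hU'; exact: fin_num_measure.
have hr : r <= (1 + delta) * a * p.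
  by move: hi; rewrite (PE mA) (PE (mE i)) (PE mI) -!EFinM lee_fin.
have hp : c0 < p by move: c0i; rewrite (PE (mE i)) lte_fin.
have a0 : 0 <= a := pr_ge0 _.
have hpow : 0 <= (1 - c0) ^+ n by apply: exprn_ge0; lra.
rewrite exprSr.
have [ua|ua] := leP 0 (1 - (1 + delta) * a).
  have : 1 - (1 + delta) * b <= (1 - (1 + delta) * a) * (1 - (1 + delta) * p) by nra.
  have : (1 - (1 + delta) * a) * (1 - (1 + delta) * p) <= (1 - (1 + delta) * a) * (1 - c0).
    by apply: ler_wpM2l => //; nra.
  have : (1 - (1 + delta) * a) * (1 - c0) <= (1 - c0) ^+ n * (1 - c0).
    by apply: ler_wpM2r => //; lra.
  lra.
have : 0 <= (1 - c0) ^+ n * (1 - c0) by apply: mulr_ge0 => //; lra.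
nra.
Qed.

Lemma full (c0 : R) t : 0 < c0 < 1 ->
  (forall delta : R, 0 < delta -> forall q1 q2, (q1 < q2)%N -> forall N, exists i, (N <= i)%N /\ (c0%:E < P (E i))%E /\
     (P (union_range E q1 q2 `&` E i) <=
              (1 + delta)%:E * P (union_range E q1 q2) * P (E i))%E) ->
  P (\bigcup_(k in [set k | (t <= k)%N]) E k) = 1%E.
Proof.
move=> hc0 H; have /andP[c0p c01] := hc0.
have mF : measurable (\bigcup_(k in [set k | (t <= k)%N]) E k).
  by apply: bigcup_measurable => k _; exact: mE.
rewrite (PE mF); congr (_%:E).
set f := fine _.
apply/eqP; rewrite eq_le pr_le1 //=.
rewrite leNgt; apply/negP => hf.
set eps := 1 - f.
have ep : 0 < eps by rewrite /eps; lra.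
have h1 : `|1 - c0| < 1 by rewrite ger0_norm; lra.
have /cvgrPdist_lt/(_ (eps / 4)) := cvg_expr h1.
case; first lra.
move=> N _ HN; have := HN N (leqnn N) => /=; rewrite sub0r normrN => hN.
have hN' : (1 - c0) ^+ N < eps / 4 by apply: le_lt_trans hN; exact: ler_norm.
have dp : 0 < eps / 4 by lra.
have [q2 [tq2 hq]] := iter c0 (eps / 4) t hc0 dp (H _ dp) N.
have mA := @ur_meas _ _ E t q2 mE.
have sub : union_range E t q2 `<=` \bigcup_(k in [set k | (t <= k)%N]) E k.
  move=> x /mem_ur [j [/andP[h1' h2] hj]]; by exists j.
have af : fine (P (union_range E t q2)) <= f := pr_le mA mF sub.
have a1 := pr_le1 mA.
have a0 := pr_ge0 (union_range E t q2).
rewrite /eps in hN' dp hq.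
have := mulr_ge0 (x := 1 - f) (y := 1 - fine (P (union_range E t q2))) ltac:(lra) ltac:(lra).
lra.
Qed.

Lemma core (c0 : R) : 0 < c0 < 1 ->
  (forall delta : R, 0 < delta -> forall q1 q2, (q1 < q2)%N -> forall N, exists i, (N <= i)%N /\ (c0%:E < P (E i))%E /\
     (P (union_range E q1 q2 `&` E i) <=
              (1 + delta)%:E * P (union_range E q1 q2) * P (E i))%E) ->
  P (lim_sup_set E) = 1%E.
Proof.
move=> hc H.
have hf := fun t => full c0 t hc H.
have h := lim_sup_set_cvg P E mE.
have fin : (P (\bigcup_(k >= 0) E k) < +oo)%E.
  have e : P (\bigcup_(k >= 0) E k) = 1%E by exact: hf 0%N.
  by rewrite e ltry.
have := h fin.
have -> : (fun n => P (\bigcup_(k >= n) E k)) = fun _ => 1%E.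
  by apply/funext => n; exact: hf n.
move=> /cvg_lim <- //; exact: lim_cst.
Qed.
End S.

Lemma esup_le (R : realType) (u : (\bar R)^nat) N :
  (limn_esup u <= esups u N)%E.
Proof.
rewrite limn_esup_lim; apply: lime_le; first exact: is_cvg_esups.
near=> m; apply: nonincreasing_esups; near: m; by exists N.
Unshelve. all: by end_near.
Qed.

Theorem theorem4 (d : measure_display) (T : measurableType d) (R : realType)
  (P : probability T R) (E : (set T)^nat) (mE : forall i, measurable (E i)) :
  ((exists c0 : R, 0 < c0 < 1 /\
     forall delta : R, 0 < delta -> forall q1 q2 : nat, (q1 < q2)%N ->
       exists (I : set nat) (i0 : nat), infinite_set I /\
         (c0%:E < ereal_inf [set P (E i) | i in I])%E /\
         forall i, I i -> (i0 <= i)%N ->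
           (P (union_range E q1 q2 `&` E i) <=
              (1 + delta)%:E * P (union_range E q1 q2) * P (E i))%E) ->
   P (lim_sup_set E) = 1%E)
  /\
  ((0 < limn_esup (fun i => P (E i)))%E ->
   (forall delta : R, 0 < delta -> forall q1 q2 : nat, (q1 < q2)%N ->
      exists i0 : nat, forall i, (i0 <= i)%N ->
        (P (union_range E q1 q2 `&` E i) <=
           (1 + delta)%:E * P (union_range E q1 q2) * P (E i))%E) ->
   P (lim_sup_set E) = 1%E).
Proof.
split.
  move=> [c0 [hc H]]; apply: (@core _ _ _ P E mE _ hc) => delta dp q1 q2 hq N.
  have [I [i0 [hI [hinf hi]]]] := H delta dp q1 q2 hq.
  have [i [Ii hi']] := @inf_ge I (maxn N i0) hI.
  exists i; split; first exact: leq_trans (leq_maxl _ _) hi'.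
  split; last by apply: hi => //; exact: leq_trans (leq_maxr _ _) hi'.
  apply: lt_le_trans hinf _; apply: ereal_inf_lbound; by exists i.
move=> hL H.
set L := limn_esup _ in hL.
have hL1 : (L <= 1)%E.
  apply: le_trans (esup_le _ _ 0%N) _.
  apply: ge_ereal_sup => _ [k _ <-]; exact: probability_le1.
have [l Ll] : exists l, L = l%:E.
  move: hL hL1; case: L => [l| |] //; by exists l.
rewrite Ll lte_fin in hL; rewrite Ll lee_fin in hL1.
have hc : 0 < l / 4 < 1 by apply/andP; split; lra.
apply: (@core _ _ _ P E mE _ hc) => delta dp q1 q2 hq N.
have [i0 hi0] := H delta dp q1 q2 hq.
have [i [hi hPi]] : exists i, (maxn N i0 <= i)%N /\ ((l / 2)%:E < P (E i))%E.
  apply: contrapT => hn.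
  have : (L <= (l / 2)%:E)%E.
    apply: le_trans (esup_le _ _ (maxn N i0)) _.
    apply: ge_ereal_sup => _ [k /= hk <-].
    rewrite leNgt; apply/negP => hk'; apply: hn; by exists k.
  rewrite Ll lee_fin; lra.
exists i; split; first exact: leq_trans (leq_maxl _ _) hi.
split; last by apply: hi0; exact: leq_trans (leq_maxr _ _) hi.
apply: lt_trans hPi; rewrite lte_fin; lra.
Qed.
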